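(* In the single-node deterministic selection process described in the context, let $c_8>0$ be arbitrary, and set $c_4=(b-1)\big((c_1/\Delta_{\min}(i))^{1/c_2}+1\big)$, $c_6=1-c_3/c_2$, $\xi(j)=\big((c_1/\Delta(j))^{1/c_2}+1\big)^{c_8}$ and $$c_7=(b-1)\Big(\max_{j\neq j^*}\xi(j)+(2(b-1))^{c_8}\Big)+(2c_4)^{c_8}.$$ Then for all $z>0$ and all $\tau\ge1$, $$\mathbb{P}\Big[\big|\mathbb{E}[V_\tau(i)]-V_\tau(i)\big|\ge\frac{z}{\tau^{c_6}}\Big]\le\frac{c_7}{z^{c_8}}.$$
   Context: Fix constants $c_1>0$ and $0<c_3<c_2$. A node $i$ has a finite set $C(i)$ of $b\ge2$ children; each child $j$ has a deterministic value $Q^*(j)\in[0,1]$, and there is a unique maximizer $j^*=\arg\max_{j\in C(i)}Q^*(j)$. Set $V^*(i)=Q^*(j^* )$, $\Delta(j)=Q^*(j^* )-Q^*(j)$ and $\Delta_{\min}(i)=\min_{j\neq j^*}\Delta(j)>0$. The node is visited at times $s=1,2,\dots$; at visit $s$ one child $\mu(s)$ is selected and yields value $Q^*(\mu(s))$. Let $T(i,s)=s-1$ be the number of previous visits to $i$ and $T(j,s)$ the number of previous selections of $j$ (before visit $s$). Selection rule: if some child has $T(j,s)=0$, select one such child (chosen at random); otherwise select a maximizer of $Q^*(j)+c_1\,T(i,s)^{c_3}/T(j,s)^{c_2}$, ties broken at random. After $\tau$ visits, $T_\tau(j)$ denotes the number of selections of $j$ among visits $1,\dots,\tau$, and $V_\tau(i)=\frac1\tau\sum_{s=1}^{\tau}Q^*(\mu(s))$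 is the average value of node $i$. *)

(* Defs.v *)
From HB Require Import structures.
From mathcomp Require Import all_boot all_order all_algebra.
From mathcomp Require Import reals exp.
Set Implicit Arguments. Unset Strict Implicit. Unset Printing Implicit Defensive.
Import Order.TTheory GRing.Theory Num.Theory.
Local Open Scope ring_scope.

Section Process.
Variables (R : realType) (C : finType) (Q : C -> R) (c1 c2 c3 : R).

Definition Tchild (h : seq C) (j : C) : nat := count_mem j h.

(* The UCB-like score  Q(j) + c1 * T(i,s)^c3 / T(j,s)^c2, with T(i,s) = size h. *)
Definition score (h : seq C) (j : C) : R :=
  Q j + c1 * powR (size h)%:R c3 / powR (Tchild h j)%:R c2.

Definition candidates (h : seq C) : {set C} :=
  let U := [set j | Tchild h j == 0%N] in
  if U != set0 then U
  else [set j | [forall k, score h k <= score h j]].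

(* Probability of a selection sequence of length tau: at each visit the
   child is chosen uniformly at random among the candidates. *)
Definition seq_prob (tau : nat) (t : tau.-tuple C) : R :=
  \prod_(k < tau)
     (if tnth t k \in candidates (take k t)
      then (#|candidates (take k t)|%:R)^-1 else 0).

Definition Vavg (tau : nat) (t : tau.-tuple C) : R :=
  (\sum_(k < tau) Q (tnth t k)) / tau%:R.

Definition EV (tau : nat) : R :=
  \sum_(t : tau.-tuple C) seq_prob t * Vavg t.

Definition prob_dev (tau : nat) (a : R) : R :=
  \sum_(t : tau.-tuple C | a <= `|EV tau - Vavg t|) seq_prob t.

End Process.

(* Main.v *)
Require Import Defs.
From HB Require Import structures.
From mathcomp Require Import all_boot all_order all_algebra.
From mathcomp Require Import reals exp.
From mathcomp Require Import ring lra.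
Import Order.TTheory GRing.Theory Num.Theory.
Local Open Scope ring_scope.

Section Helpers.
Variables (R : realType) (C : finType) (Q : C -> R) (c1 c2 c3 : R).

Lemma cand_nonempty (j0 : C) (h : seq C) : exists j, j \in candidates Q c1 c2 c3 h.
Proof.
rewrite /candidates /=.
case: ifPn => [/set0Pn [j Hj]|_]; first by exists j.
have [j _ Hj] := @real_arg_maxP R C j0 predT (score Q c1 c2 c3 h) isT
  (fun i _ => num_real _).
exists j; rewrite inE; apply/forallP => k; exact: Hj.
Qed.

Definition hext n (p : n.-tuple C * C) : n.+1.-tuple C := [tuple of rcons p.1 p.2].
Definition gext n (u : n.+1.-tuple C) : n.-tuple C * C :=
  ([tuple of belast (thead u) (behead u)], last (thead u) (behead u)).

Arguments hext {n}.
Arguments gext {n}.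

Lemma hgK n : cancel (@gext n) (@hext n).
Proof.
move=> u; apply: val_inj => /=.
rewrite -lastI. by case: u => [[|a s] //=].
Qed.

Lemma hext_inj n : injective (@hext n).
Proof.
move=> [t x] [t' x'] /(congr1 val) /= /rcons_inj [/val_inj -> ->] //.
Qed.

Lemma ghK n : cancel (@hext n) (@gext n).
Proof. move=> p; apply: hext_inj; exact: hgK. Qed.

Lemma sum_tuple_S n (F : n.+1.-tuple C -> R) :
  \sum_(u : n.+1.-tuple C) F u = \sum_(t : n.-tuple C) \sum_(x : C) F (hext (t, x)).
Proof.
rewrite (reindex (@hext n)); last by exists (@gext n) => u _; [apply: ghK | apply: hgK].
by rewrite pair_bigA.
Qed.

Lemma seq_prob_S n (t : n.-tuple C) x :
  seq_prob Q c1 c2 c3 (hext (t, x)) = seq_prob Q c1 c2 c3 t *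
    (if x \in candidates Q c1 c2 c3 t
      then (#|candidates Q c1 c2 c3 t|%:R)^-1 else 0).
Proof.
rewrite /seq_prob big_ord_recr /=; congr (_ * _).
  apply: eq_bigr => k _.
  have Ht : tnth (hext (t, x)) (widen_ord (leqnSn n) k) = tnth t k.
    by rewrite !(tnth_nth x) /= nth_rcons size_tuple ltn_ord.
  have Hk : take k (hext (t,x)) = take k t.
    by rewrite /= -cats1 takel_cat // size_tuple ltnW.
  by rewrite Ht Hk.
have Ht : tnth (hext (t, x)) ord_max = x.
  by rewrite (tnth_nth x) /= nth_rcons size_tuple ltnn eqxx.
have Hk : take n (hext (t,x)) = t.
  by rewrite /= -cats1 takel_cat ?size_tuple // -{1}(size_tuple t) take_size.
by rewrite Ht Hk.
Qed.

Lemma sum_seq_prob (j0 : C) n : \sum_(t : n.-tuple C) seq_prob Q c1 c2 c3 t = 1.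
Proof.
elim: n => [|n IH].
  rewrite (big_pred1 [tuple]) /=; first by rewrite /seq_prob big_ord0.
  by move=> t; apply/esym/eqP; exact: tuple0.
rewrite sum_tuple_S -[RHS]IH; apply: eq_bigr => t _.
under eq_bigr do rewrite seq_prob_S.
rewrite -mulr_sumr -[RHS]mulr1; congr (_ * _).
rewrite -big_mkcond /= sumr_const.
have [j Hj] := cand_nonempty j0 t.
have Hc : (#|candidates Q c1 c2 c3 t|%:R : R) != 0.
  by rewrite pnatr_eq0 -lt0n; apply/card_gt0P; exists j.
by rewrite -[RHS](mulVf Hc) mulr_natr.
Qed.

End Helpers.
Section Count.
Variables (R : realType) (C : finType) (Q : C -> R) (c1 c2 c3 : R) (jstar : C).
Hypotheses (c1p : 0 < c1) (c3p : 0 < c3) (c32 : c3 < c2).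

Lemma valid_step n (t : n.-tuple C) (k : 'I_n) :
  seq_prob Q c1 c2 c3 t != 0 -> tnth t k \in candidates Q c1 c2 c3 (take k t).
Proof.
rewrite /seq_prob => /prodf_neq0 /(_ k isT).
by case: ifP => // _; rewrite eqxx.
Qed.

Lemma score_ge h j : Q j <= score Q c1 c2 c3 h j.
Proof.
rewrite /score lerDl; apply: mulr_ge0; last by rewrite invr_ge0 powR_ge0.
by apply: mulr_ge0; [exact: ltW | exact: powR_ge0].
Qed.

Lemma one_step (h : seq C) j n :
  0 < Q jstar - Q j -> (size h <= n)%N ->
  j \in candidates Q c1 c2 c3 h -> (0 < Tchild h j)%N ->
  (Tchild h j)%:R <= powR (c1 / (Q jstar - Q j)) c2^-1 * powR n%:R (c3 / c2).
Proof.
move=> Dp hn; rewrite /candidates /=.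
case: ifPn => [_|]; first by rewrite inE => /eqP ->.
move=> _; rewrite inE => /forallP /(_ jstar) Hs Tp.
have c2p : 0 < c2 by apply: lt_trans c32.
set T : R := (Tchild h j)%:R.
have Tp' : 0 < T by rewrite ltr0n.
set P := powR (size h)%:R c3.
have P0 : 0 <= P by exact: powR_ge0.
have HT : powR T c2 <= c1 * P / (Q jstar - Q j).
  have := le_trans (score_ge h jstar) Hs; rewrite /score -/T -/P.
  rewrite -lerBlDl => H.
  rewrite ler_pdivlMr // mulrC; move: H.
  have Tc : 0 < powR T c2 by apply: powR_gt0.
  rewrite ler_pdivlMr // => H; by rewrite mulrC.
have -> : T = powR (powR T c2) c2^-1.
  by rewrite -powRrM mulfV ?gt_eqF // powRr1 // ltW.
apply: (le_trans (ge0_ler_powR _ _ _ HT)).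
- by rewrite invr_ge0 ltW.
- by rewrite nnegrE powR_ge0.
- by rewrite nnegrE divr_ge0 // ?mulr_ge0 // ltW.
rewrite mulrAC (@powRM _ (c1 / (Q jstar - Q j)) P); last 2 first.
- by rewrite divr_ge0 // ltW.
- done.
apply: ler_wpM2l; first exact: powR_ge0.
rewrite /P -powRrM; apply: ge0_ler_powR.
- by rewrite divr_ge0 // ltW.
- by rewrite nnegrE.
- by rewrite nnegrE.
- by rewrite ler_nat.
Qed.

Lemma count_bound n (t : n.-tuple C) j :
  0 < Q jstar - Q j -> seq_prob Q c1 c2 c3 t != 0 ->
  (Tchild t j)%:R <= powR (c1 / (Q jstar - Q j)) c2^-1 * powR n%:R (c3 / c2) + 1.
Proof.
move=> Dp Hv.
have A0 : 0 <= powR (c1 / (Q jstar - Q j)) c2^-1 * powR n%:R (c3 / c2).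
  by apply: mulr_ge0; exact: powR_ge0.
suff H : forall k, (k <= n)%N -> (Tchild (take k t) j)%:R <=
   powR (c1 / (Q jstar - Q j)) c2^-1 * powR n%:R (c3 / c2) + 1.
  by have := H n (leqnn n); rewrite -{1}(size_tuple t) take_size.
elim=> [|k IH] kn.
  by rewrite take0 /Tchild /= ler_wpDl.
have kn' : (k < size t)%N by rewrite size_tuple.
rewrite (take_nth j kn') /Tchild -cats1 count_cat /= addn0.
have Hc := @valid_step n t (Ordinal kn) Hv.
rewrite (tnth_nth j) /= in Hc.
case: eqP => [Ex|_]; last by rewrite addn0; apply: IH; exact: ltnW.
rewrite natrD lerD2r.
case: (posnP (count_mem j (take k t))) => [->|Tp]; first by [].
apply: one_step => //.
- by rewrite size_take_min size_tuple geq_minr.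
- by rewrite -Ex.
Qed.

End Count.
Lemma sum_seq_count (R : realType) (C : finType) (F : C -> R) (s : seq C) :
  \sum_(x <- s) F x = \sum_j (count_mem j s)%:R * F j.
Proof.
elim: s => [|x s IH].
  by rewrite big_nil big1 // => j _; rewrite mul0r.
rewrite big_cons IH /=.
under [RHS]eq_bigr do rewrite natrD mulrDl.
rewrite big_split /=; congr (_ + _).
rewrite (bigD1 x) //= eqxx mul1r big1 ?addr0 // => j /negbTE.
by rewrite eq_sym => ->; rewrite mul0r.
Qed.

Lemma card_neq (C : finType) (j0 : C) : #|[pred j | j != j0]| = #|C|.-1.
Proof. by rewrite -(cardC1 j0); apply: eq_card. Qed.
Theorem lemma8 (R : realType) (C : finType) (Q : C -> R) (jstar : C)
    (c1 c2 c3 c8 : R) :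
  0 < c1 -> 0 < c3 -> c3 < c2 -> 0 < c8 ->
  (2 <= #|C|)%N ->
  (forall j, 0 <= Q j <= 1) ->
  (forall j, j != jstar -> Q j < Q jstar) ->
  let b : R := #|C|%:R in
  let Delta (j : C) : R := Q jstar - Q j in
  (* Delta_min = min_{j <> j*} Delta j; all Delta j <= 1, so the initial 1 is harmless *)
  let Delta_min : R := \big[Num.min/1]_(j | j != jstar) Delta j in
  let c4 : R := (b - 1) * (powR (c1 / Delta_min) (c2^-1) + 1) in
  let c6 : R := 1 - c3 / c2 in
  let xi (j : C) : R := powR (powR (c1 / Delta j) (c2^-1) + 1) c8 in
  let c7 : R := (b - 1) * (\big[Num.max/0]_(j | j != jstar) xi j
                           + powR (2 * (b - 1)) c8) + powR (2 * c4) c8 in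
  forall (z : R) (tau : nat), 0 < z -> (1 <= tau)%N ->
    prob_dev Q c1 c2 c3 tau (z / powR tau%:R c6) <= c7 / powR z c8.
Proof.
move=> c1p c3p c32 c8p hC Qb Qmax b Delta Delta_min c4 c6 xi c7 z tau zp tau1.
have c2p : 0 < c2 by apply: lt_trans c32.
have Dp : forall j, j != jstar -> 0 < Delta j by move=> j /Qmax; rewrite subr_gt0.
have D0 : forall j, 0 <= Delta j.
  move=> j; case: (eqVneq j jstar) => [->|hj]; first by rewrite /Delta subrr.
  exact: ltW (Dp j hj).
have D1 : forall j, Delta j <= 1.
  move=> j; rewrite /Delta; have /andP[? ?] := Qb j; have /andP[? ?] := Qb jstar; lra.
have Dmp : 0 < Delta_min.
  rewrite /Delta_min; apply: (big_ind (fun x => 0 < x)) => //.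
    by move=> x y hx hy; rewrite lt_min hx hy.
have Dmle : forall j, j != jstar -> Delta_min <= Delta j.
  by move=> j hj; rewrite /Delta_min (bigD1 j) //= ge_min lexx.
set e := c3 / c2.
have e0 : 0 <= e by rewrite divr_ge0 // ltW.
set Amin := powR (c1 / Delta_min) c2^-1.
have Amin0 : 0 <= Amin by exact: powR_ge0.
set n : R := tau%:R.
have np : 0 < n by rewrite ltr0n.
have P1 : 1 <= powR n e.
  have := @ge0_ler_powR R e e0 1 n; rewrite powR1; apply.
  - by rewrite nnegrE.
  - by rewrite nnegrE ltW.
  - by rewrite /n ler1n.
have b1 : 1 < b by rewrite /b ltr1n.
have c4p : 0 < c4 by rewrite /c4 mulr_gt0 // ?subr_gt0 // ltr_wpDl.
set W := c4 * powR n e / n.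
have pge : forall t : tau.-tuple C, 0 <= seq_prob Q c1 c2 c3 t.
  move=> t; apply: prodr_ge0 => k _; case: ifP => // _.
  by rewrite invr_ge0 ler0n.
have bnd : forall t : tau.-tuple C, seq_prob Q c1 c2 c3 t != 0 ->
   Q jstar - W <= Vavg Q t <= Q jstar.
  move=> t Hv.
  set S := \sum_j (count_mem j t)%:R * Delta j.
  have Hdiff : Q jstar - Vavg Q t = S / n.
    rewrite /S -sum_seq_count big_tuple /Vavg /Delta sumrB sumr_const card_ord.
    rewrite -mulr_natr -/n; field; exact: lt0r_neq0.
  have S0 : 0 <= S by apply: sumr_ge0 => j _; apply: mulr_ge0 => //; rewrite ler0n.
  have Sle : S <= c4 * powR n e.
    rewrite /S (bigD1 jstar) //= {1}/Delta subrr mulr0 add0r.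
    apply: (@le_trans _ _ (\sum_(j | j != jstar) (Amin + 1) * powR n e)).
      apply: ler_sum => j hj.
      have Hc := @count_bound R C Q c1 c2 c3 jstar c1p c3p c32 tau t j (Dp j hj) Hv.
      have Aj : powR (c1 / Delta j) c2^-1 <= Amin.
        apply: ge0_ler_powR; first by rewrite invr_ge0 ltW.
        - by rewrite nnegrE divr_ge0 // ltW // Dp.
        - by rewrite nnegrE divr_ge0 // ltW.
        apply: ler_wpM2l; first exact: ltW.
        by rewrite lef_pV2 ?posrE ?Dp // Dmle.
      have Pe0 : 0 <= powR n e by exact: powR_ge0.
      have Aj0 : 0 <= powR (c1 / Delta j) c2^-1 by exact: powR_ge0.
      have Dj := D1 j; have Dj0 := D0 j.
      set cnt := (count_mem j t)%:R in Hc *.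
      have cnt0 : 0 <= cnt by rewrite ler0n.
      rewrite /Delta in Hc Dj Dj0 Aj Aj0 *.
      set A := powR _ c2^-1 in Hc Aj Aj0.
      set P := powR n e in Hc Pe0 P1 *.
      set d := Q jstar - Q j in Hc Dj Dj0 Aj Aj0 *.
      have h1 : cnt * d <= (A * P + 1) * d by apply: ler_wpM2r.
      have h2 : (A * P + 1) * d <= A * P + 1.
        by rewrite -[X in _ <= X]mulr1; apply: ler_wpM2l => //; apply: addr_ge0 => //; apply: mulr_ge0.
      have h3 : A * P <= Amin * P by apply: ler_wpM2r.
      nra.
    rewrite sumr_const card_neq /c4 -mulr_natl -mulrA; apply: ler_wpM2r.
      by apply: mulr_ge0; [apply: addr_ge0 | apply: powR_ge0].
    rewrite /b; move: hC; case: #|C| => // m _ /=; by rewrite -natr1 addrK.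
  have SW : S / n <= W by rewrite /W ler_wpM2r // invr_ge0 ltW.
  have SW0 : 0 <= S / n by rewrite divr_ge0 // ltW.
  move: Hdiff; set V := Vavg Q t => Hd.
  apply/andP; split; lra.
have EVlo : Q jstar - W <= EV Q c1 c2 c3 tau.
  rewrite /EV -[Q jstar - W]mul1r -(@sum_seq_prob R C Q c1 c2 c3 jstar tau) mulr_suml.
  apply: ler_sum => t _; case: (eqVneq (seq_prob Q c1 c2 c3 t) 0) => [->|Hv].
    by rewrite !mul0r.
  by apply: ler_wpM2l; [exact: pge | case/andP: (bnd t Hv)].
have EVhi : EV Q c1 c2 c3 tau <= Q jstar.
  rewrite /EV -[Q jstar]mul1r -(@sum_seq_prob R C Q c1 c2 c3 jstar tau) mulr_suml.
  apply: ler_sum => t _; case: (eqVneq (seq_prob Q c1 c2 c3 t) 0) => [->|Hv].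
    by rewrite !mul0r.
  by apply: ler_wpM2l; [exact: pge | case/andP: (bnd t Hv)].
have pc6 : 0 < powR n c6 by apply: powR_gt0.
have pe : 0 < powR n e by apply: powR_gt0.
have Wc : W = c4 / powR n c6.
  have Hn : powR n c6 * powR n e = n.
    rewrite -powRD; last by apply/implyP => _; exact: lt0r_neq0.
    by rewrite /c6 /e subrK powRr1 // ltW.
  by rewrite /W -[X in _ / X]Hn; field; apply/andP; split; exact: lt0r_neq0.
have xi0 : 0 <= \big[Num.max/0]_(j | j != jstar) xi j.
  apply: (big_ind (fun x => 0 <= x)) => //.
    by move=> x y hx hy; rewrite le_max hx.
  move=> j _; exact: powR_ge0.
have c7ge : powR (2 * c4) c8 <= c7.
  rewrite /c7 lerDr; apply: mulr_ge0; first by rewrite subr_ge0 ltW.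
  by apply: addr_ge0 => //; exact: powR_ge0.
have pz : 0 < powR z c8 by apply: powR_gt0.
case: (lerP z (2 * c4)) => hz.
- apply: (@le_trans _ _ 1).
    rewrite /prob_dev -(@sum_seq_prob R C Q c1 c2 c3 jstar tau).
    rewrite [X in _ <= X](bigID (fun t : tau.-tuple C => z / powR n c6 <= `|EV Q c1 c2 c3 tau - Vavg Q t|)) /= lerDl.
    by apply: sumr_ge0 => t _; exact: pge.
  rewrite ler_pdivlMr // mul1r; apply: le_trans c7ge.
  apply: ge0_ler_powR => //; first exact: ltW.
  + by rewrite nnegrE ltW.
  + by rewrite nnegrE mulr_ge0 // ltW.
- rewrite /prob_dev big1; first by rewrite divr_ge0 // ?(le_trans _ c7ge) ?powR_ge0 // ltW.
  move=> t Ht; apply/eqP; apply: contraLR Ht => Hv; rewrite -ltNge.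
  have /andP[h1 h2] := bnd t Hv.
  have Hle : `|EV Q c1 c2 c3 tau - Vavg Q t| <= W.
    by rewrite ler_norml; apply/andP; split; lra.
  apply: (le_lt_trans Hle); rewrite Wc ltr_pM2r ?invr_gt0 //; lra.
Qed.
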